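(* Let $Q=\partial_\psi S$ be a $\partial_\psi$-delta operator, with $S\in\Sigma_\psi$ invertible, and let $(p_n)_{n\ge0}$ be its $\partial_\psi$-basic polynomial sequence. Then for all $n>0$: (1) $p_n(x)=Q'\,S^{-n-1}x^n$; (2) $p_n(x)=S^{-n}x^n-\frac{n_\psi}{n}\,(S^{-n})'\,x^{n-1}$; (3) $p_n(x)=\frac{n_\psi}{n}\,\hat x_\psi\,S^{-n}x^{n-1}$; (4) (ψ-Rodrigues formula) $p_n(x)=\frac{n_\psi}{n}\,\hat x_\psi\,(Q')^{-1}p_{n-1}(x)$, where $Q'$ is invertible in $\Sigma_\psi$.
   Context: Let $F$ be a field of characteristic $0$, $P=F[x]$. Fix $(\psi_n)_{n\ge0}$ in $F$ with $\psi_0=1$, $\psi_n\ne0$, $\psi_{-1}=0$; $n_\psi=\psi_{n-1}/\psi_n$, $n_\psi!=1/\psi_n$, $0_\psi!=1$. $\partial_\psi x^n=n_\psi x^{n-1}$ (linear); $E^a(\partial_\psi)=\sum_k\frac{a^k}{k_\psi!}\partial_\psi^k$. $\Sigma_\psi$: algebra of linear $T:P\to P$ commuting with all $E^a(\partial_\psi)$. A $\partial_\psi$-delta operator is $Q\in\Sigma_\psi$ with $Q(x)$ a nonzero constant; its $\partial_\psi$-basic sequence: $\deg p_n=n$, $p_0=1$, $p_n(0)=0$ for $n>0$, $Qp_n=n_\psi p_{n-1}$. $\hat x_\psi x^n=\frac{n+1}{(n+1)_\psi}x^{n+1}$ (linear); the Pincherle $\psi$-derivative of $T\in\Sigma_\psi$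 is $T'=T\hat x_\psi-\hat x_\psi T\in\Sigma_\psi$. *)

(* Defs.v *)
From mathcomp Require Import all_boot all_algebra.
Set Implicit Arguments. Unset Strict Implicit. Unset Printing Implicit Defensive.
Import GRing.Theory.
Local Open Scope ring_scope.

(* n_psi = psi_{n-1}/psi_n, with psi_{-1} = 0, so 0_psi = 0 *)
Definition npsi (F : fieldType) (psi : nat -> F) (n : nat) : F :=
  if n is m.+1 then psi m / psi m.+1 else 0.

(* partial_psi : x^n |-> n_psi x^{n-1}, extended linearly *)
Definition dpsi (F : fieldType) (psi : nat -> F) (p : {poly F}) : {poly F} :=
  \poly_(i < size p) (p`_i.+1 * npsi psi i.+1).

(* hat x_psi : x^n |-> (n+1)/(n+1)_psi x^{n+1}, extended linearly *)
Definition xhat (F : fieldType) (psi : nat -> F) (p : {poly F}) : {poly F} :=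
  \poly_(i < (size p).+1)
     (if i is j.+1 then p`_j * j.+1%:R / npsi psi j.+1 else 0).

(* E^a(partial_psi) = sum_k a^k / k_psi! partial_psi^k, with 1/k_psi! = psi_k;
   on a polynomial p the terms with k >= size p vanish. *)
Definition Eop (F : fieldType) (psi : nat -> F) (a : F) (p : {poly F}) : {poly F} :=
  \sum_(k < size p) (a ^+ k * psi k) *: iter k (dpsi psi) p.

Definition lin (F : fieldType) (T : {poly F} -> {poly F}) : Prop :=
  forall (a : F) (p q : {poly F}), T (a *: p + q) = a *: T p + T q.

Definition in_Sigma (F : fieldType) (psi : nat -> F) (T : {poly F} -> {poly F}) : Prop :=
  lin T /\ forall (a : F) (p : {poly F}), T (Eop psi a p) = Eop psi a (T p).

Definition is_delta (F : fieldType) (psi : nat -> F) (Q : {poly F} -> {poly F}) : Prop :=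
  in_Sigma psi Q /\ exists c : F, c != 0 /\ Q 'X = c%:P.

Definition basic_seq (F : fieldType) (psi : nat -> F) (Q : {poly F} -> {poly F})
  (p : nat -> {poly F}) : Prop :=
  (forall n, size (p n) = n.+1) /\ p 0%N = 1 /\
  (forall n, (0 < n)%N -> (p n).[0] = 0) /\
  (forall n, Q (p n) = npsi psi n *: p n.-1).
(* for n = 0 this reads Q p_0 = 0_psi p_{-1} = 0, since npsi 0 = 0 *)

Definition pincherle (F : fieldType) (psi : nat -> F) (T : {poly F} -> {poly F})
  : {poly F} -> {poly F} :=
  fun p => T (xhat psi p) - xhat psi (T p).

(* Main.v *)
Require Import Defs.
From mathcomp Require Import all_boot all_algebra.
From mathcomp Require Import ring.
Set Implicit Arguments. Unset Strict Implicit. Unset Printing Implicit Defensive.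
Import GRing.Theory.
Local Open Scope ring_scope.

Section Aux.
Variable (F : fieldType) (psi : nat -> F).
Hypothesis hpsi : forall n, psi n != 0.
Local Notation D := (dpsi psi).
Local Notation X := (xhat psi).

Lemma npsiS j : npsi psi j.+1 = psi j / psi j.+1. Proof. by []. Qed.
Lemma npsiS_neq0 j : npsi psi j.+1 != 0.
Proof. by rewrite npsiS mulf_neq0 // invr_eq0. Qed.

Lemma coef_dpsi p i : (D p)`_i = p`_i.+1 * npsi psi i.+1.
Proof.
rewrite /dpsi coef_poly; case: ltnP => // h.
by rewrite nth_default ?mul0r // (leq_trans h).
Qed.

Lemma coef_xhat p i : (X p)`_i =
  if i is j.+1 then p`_j * j.+1%:R / npsi psi j.+1 else 0.
Proof.
case: i => [|j]; rewrite /xhat coef_poly; first by case: (_ < _)%N.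
rewrite ltnS; case: ltnP => // h.
by rewrite nth_default ?mul0r.
Qed.

Lemma coef_iterD k r i : (iter k D r)`_i = r`_(i + k) * (psi i / psi (i + k)).
Proof.
elim: k i => [|k IH] i.
  by rewrite addn0 /= divff // mulr1.
rewrite iterS coef_dpsi IH npsiS addSnnS.
have h1 := hpsi i. have h2 := hpsi i.+1. have h3 := hpsi (i + k.+1).
field. by rewrite h2 h3.
Qed.

Lemma lin_dpsi : lin D.
Proof. move=> a p q; apply/polyP=> i; rewrite coef_dpsi !coefD !coefZ !coef_dpsi; ring. Qed.

Lemma lin_xhat : lin X.
Proof.
move=> a p q; apply/polyP=> i; rewrite coef_xhat !coefD !coefZ !coef_xhat.
case: i => [|j] /=; [by rewrite mulr0 addr0 | rewrite coefD coefZ; ring].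
Qed.

Lemma commDX p : D (X p) = X (D p) + p.
Proof.
apply/polyP=> i; rewrite coef_dpsi coefD !coef_xhat.
have h := npsiS_neq0 i.
case: i h => [|j] h.
  by rewrite add0r mulr1 divfK.
rewrite coef_dpsi -[j.+2]addn1 natrD.
have h' := npsiS_neq0 j.
field. apply/andP; split => //. by rewrite addn1.
Qed.

Lemma iterD_size k (r : {poly F}) : (size r <= k)%N -> iter k D r = 0.
Proof.
move=> h; apply/polyP=> i; rewrite coef_iterD coef0 nth_default ?mul0r //.
by rewrite (leq_trans h) // leq_addl.
Qed.

Lemma iterD_eq0_size k (r : {poly F}) : iter k D r = 0 -> (size r <= k)%N.
Proof.
move=> h; apply/leq_sizeP => j hj.
have := congr1 (fun q : {poly F} => q`_(j - k)) h.
rewrite coef_iterD coef0 subnK // => /eqP.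
by rewrite mulf_eq0 mulf_eq0 invr_eq0 (negbTE (hpsi _)) (negbTE (hpsi _)) !orbF => /eqP.
Qed.

Lemma D_eq0 (r : {poly F}) : D r = 0 -> r = (r`_0)%:P.
Proof. move=> h; apply: size1_polyC; exact: (@iterD_eq0_size 1). Qed.

Lemma size_D (r : {poly F}) : (size (D r) <= size r)%N.
Proof. exact: size_poly. Qed.

End Aux.

Section Lin.
Variable (F : fieldType).
Implicit Types (T : {poly F} -> {poly F}).

Lemma lin0 T : lin T -> T 0 = 0.
Proof. move=> h; have e := h 1 0 0; rewrite !scale1r addr0 in e. by apply: (addrI (T 0)); rewrite addr0 -e. Qed.
Lemma linD T : lin T -> forall p q, T (p + q) = T p + T q.
Proof. by move=> h p q; have := h 1 p q; rewrite !scale1r. Qed.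
Lemma linZ T : lin T -> forall a p, T (a *: p) = a *: T p.
Proof. by move=> h a p; rewrite -[a *: p]addr0 h lin0 // addr0. Qed.
Lemma linN T : lin T -> forall p, T (- p) = - T p.
Proof. by move=> h p; rewrite -scaleN1r linZ // scaleN1r. Qed.
Lemma linB T : lin T -> forall p q, T (p - q) = T p - T q.
Proof. by move=> h p q; rewrite linD // linN. Qed.
Lemma lin_sum T : lin T -> forall (I : Type) (r : seq I) (P : pred I) (G : I -> {poly F}),
  T (\sum_(i <- r | P i) G i) = \sum_(i <- r | P i) T (G i).
Proof.
move=> h I r P G; elim/big_rec2: _ => [|i y1 y2 _ <-]; first exact: lin0.
exact: linD.
Qed.
Lemma linC T : lin T -> forall c, T c%:P = c *: T 1.
Proof. by move=> h c; rewrite -linZ // -mul_polyC mulr1. Qed.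
Lemma lin_comp T U : lin T -> lin U -> lin (fun p => T (U p)).
Proof. by move=> hT hU a p q; rewrite hU hT. Qed.
Lemma lin_iter T k : lin T -> lin (iter k T).
Proof. move=> h; elim: k => [|k IH] a p q //=; by rewrite IH h. Qed.
End Lin.

Lemma natf_inj (F : fieldType) : [pchar F] =i pred0 -> injective (fun n : nat => n%:R : F).
Proof.
move=> hc.
have /pcharf0P hn := hc.
have W : forall m n : nat, (m%:R : F) = n%:R -> (m <= n)%N -> m = n.
  move=> m n e le.
  have: (n - m)%:R == 0 :> F by rewrite natrB // e subrr.
  by rewrite hn subn_eq0 => h; apply/eqP; rewrite eqn_leq le h.
move=> m n /= e; case/orP: (leq_total m n) => h; first exact: W.
by symmetry; apply: W.
Qed.

Lemma poly_allroots (F : fieldType) : [pchar F] =i pred0 ->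
  forall P : {poly F}, (forall a, P.[a] = 0) -> P = 0.
Proof.
move=> hc P h; apply/eqP; apply/negPn/negP => nz.
have H : (size [seq (j%:R : F) | j <- iota 0 (size P)] < size P)%N.
  apply: max_poly_roots nz _ _.
    by apply/allP => x /mapP [j _ ->]; apply/rootP.
  by rewrite map_inj_uniq ?iota_uniq //; apply: natf_inj.
by rewrite size_map size_iota ltnn in H.
Qed.

Lemma vanish (F : fieldType) : [pchar F] =i pred0 ->
  forall M (v : nat -> {poly F}), (forall a, \sum_(k < M) a ^+ k *: v k = 0) ->
  forall k, (k < M)%N -> v k = 0.
Proof.
move=> hc M v h k hk; apply/polyP => i; rewrite coef0.
pose P := \poly_(j < M) (v j)`_i.
have P0 : P = 0.
  apply: poly_allroots => // a; rewrite horner_poly.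
  have := congr1 (fun q : {poly F} => q`_i) (h a); rewrite coef_sum coef0 => e.
  rewrite -[RHS]e; apply: eq_bigr => j _; by rewrite coefZ mulrC.
by have := congr1 (fun q : {poly F} => q`_k) P0; rewrite coef_poly hk coef0.
Qed.

Section Sig.
Variable (F : fieldType) (psi : nat -> F).
Hypothesis hpsi : forall n, psi n != 0.
Hypothesis hc : [pchar F] =i pred0.
Local Notation D := (dpsi psi).
Local Notation X := (xhat psi).
Definition commD (T : {poly F} -> {poly F}) := forall p, T (D p) = D (T p).

Lemma Eop_big a (p : {poly F}) M : (size p <= M)%N ->
  Eop psi a p = \sum_(k < M) (a ^+ k * psi k) *: iter k D p.
Proof.
move=> h; rewrite /Eop (big_ord_widen M (fun k => (a ^+ k * psi k) *: iter k D p) h).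
rewrite big_mkcond; apply: eq_bigr => i _; case: ifP => // /negbT.
by rewrite -leqNgt => hi; rewrite iterD_size // scaler0.
Qed.

Lemma iter_commD T k : commD T -> forall p, T (iter k D p) = iter k D (T p).
Proof. by move=> h; elim: k => [|k IH] p //=; rewrite h IH. Qed.

Lemma commD_iter T k : commD T -> commD (iter k T).
Proof. by move=> h; elim: k => [|k IH] p //=; rewrite IH h. Qed.

Lemma Sigma_commD T : in_Sigma psi T -> commD T.
Proof.
case=> hl hE p; set M := (maxn (size p) (size (T p))).+2.
pose v k := psi k *: (T (iter k D p) - iter k D (T p)).
have hv : forall a, \sum_(k < M) a ^+ k *: v k = 0.
  move=> a; have := hE a p.
  rewrite (@Eop_big a p M) ?(@Eop_big a (T p) M); last 2 first.
    by rewrite /M -addn2; apply: leq_trans (leq_maxr _ _) (leq_addr _ _).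
    by rewrite /M -addn2; apply: leq_trans (leq_maxl _ _) (leq_addr _ _).
  rewrite lin_sum // => /eqP; rewrite -subr_eq0 -sumrB => /eqP e.
  rewrite -[RHS]e; apply: eq_bigr => k _; rewrite /v /= (linZ hl) !scalerA scalerBr //=.
have := @vanish F hc M v hv 1 isT.
rewrite /v /= => /eqP; rewrite scaler_eq0 (negbTE (hpsi 1)) /= subr_eq0 => /eqP //.
Qed.

Lemma commD_Sigma T : lin T -> commD T -> in_Sigma psi T.
Proof.
move=> hl hc' ; split=> // a p; set M := maxn (size p) (size (T p)).
rewrite (@Eop_big a p M) ?leq_maxl // (@Eop_big a (T p) M) ?leq_maxr //.
rewrite lin_sum //; apply: eq_bigr => k _; by rewrite linZ // iter_commD.
Qed.
End Sig.

Section Pin.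
Variable (F : fieldType) (psi : nat -> F).
Hypothesis hpsi : forall n, psi n != 0.
Hypothesis hpsi0 : psi 0%N = 1.
Local Notation D := (dpsi psi).
Local Notation X := (xhat psi).
Local Notation pin := (pincherle psi).

Lemma size_Dpred (r : {poly F}) : (size (D r) <= (size r).-1)%N.
Proof.
apply/leq_sizeP => j hj; rewrite coef_dpsi nth_default ?mul0r //.
by case: (size r) hj.
Qed.

Lemma poly_expand (p : {poly F}) n : (size p <= n)%N ->
  p = \sum_(k < n) p`_k *: 'X^k.
Proof.
move=> h; rewrite -poly_def; apply/polyP => i; rewrite coef_poly.
by case: ltnP => // hi; rewrite nth_default // (leq_trans h).
Qed.

Lemma expansion T : lin T -> commD psi T -> forall n (p : {poly F}), (size p <= n)%N ->
  T p = \sum_(k < n) (psi k * (T 'X^k)`_0) *: iter k D p.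
Proof.
move=> hl hD; elim=> [|n IH] p hp.
  by move: hp; rewrite leqn0 size_poly_eq0 => /eqP ->; rewrite big_ord0 lin0.
set r := T p - \sum_(k < n.+1) (psi k * (T 'X^k)`_0) *: iter k D p.
have Dr : D r = 0.
  rewrite /r (linB (@lin_dpsi _ psi)) -hD (IH (D p)); last first.
    by rewrite (leq_trans (size_Dpred p)) // -subn1 leq_subLR add1n.
  rewrite (lin_sum (@lin_dpsi _ psi)) big_ord_recr /=.
  rewrite (linZ (@lin_dpsi _ psi)) -[D (iter n D p)]/(iter n.+1 D p) iterD_size //.
  rewrite scaler0 addr0; apply/eqP; rewrite subr_eq0; apply/eqP; apply: eq_bigr => k _.
  by rewrite (linZ (@lin_dpsi _ psi)) -iterSr.
have r0 : r`_0 = 0.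
  rewrite /r coefB {1}(poly_expand hp) (lin_sum hl) !coef_sum; apply/eqP; rewrite subr_eq0; apply/eqP.
  apply: eq_bigr => k _; rewrite (linZ hl) !coefZ (coef_iterD hpsi) add0n hpsi0.
  by have := hpsi k; move=> ?; field.
have : r = 0 by rewrite (D_eq0 hpsi Dr) r0.
by move/eqP; rewrite /r subr_eq0 => /eqP.
Qed.

Lemma Sigma_comm T U : lin T -> commD psi T -> lin U -> commD psi U ->
  forall p, T (U p) = U (T p).
Proof.
move=> hT hTD hU hUD p; set M := maxn (size p) (size (T p)).
rewrite (expansion hU hUD (leq_maxl (size p) (size (T p)))).
rewrite (expansion hU hUD (leq_maxr (size p) (size (T p)))).
rewrite (lin_sum hT); apply: eq_bigr => k _; by rewrite (linZ hT) (iter_commD _ hTD).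
Qed.

Lemma pin_lin T : lin T -> lin (pin T).
Proof.
move=> hT a p q; rewrite /pincherle (@lin_xhat _ psi a p q) (hT a p q) hT.
rewrite (@lin_xhat _ psi a (T p) (T q)) -!mul_polyC; ring.
Qed.
End Pin.

Lemma tele (F : fieldType) M (f : nat -> {poly F}) :
  \sum_(k < M) (f k - f k.+1) = f 0%N - f M.
Proof.
have := telescope_sumr f (leq0n M); rewrite big_mkord => e.
by rewrite -opprB -e -sumrN; apply: eq_bigr => k _; rewrite opprB.
Qed.

Section Inv.
Variable (F : fieldType) (psi : nat -> F).
Hypothesis hpsi : forall n, psi n != 0.
Local Notation D := (dpsi psi).
Variable (T : {poly F} -> {poly F}) (c : F).
Hypothesis hT : lin T.
Hypothesis hTD : commD psi T.
Hypothesis hT1 : T 1 = c%:P.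
Hypothesis hc0 : c != 0.
Implicit Types (r p q : {poly F}).

Definition Nop (r : {poly F}) := r - c^-1 *: T r.

Lemma lin_Nop : lin Nop.
Proof. move=> a p q; rewrite /Nop hT -!mul_polyC; ring. Qed.

Lemma commD_Nop : commD psi Nop.
Proof. by move=> p; rewrite /Nop (linB (@lin_dpsi _ psi)) hTD (linZ (@lin_dpsi _ psi)). Qed.

Lemma Nop_const e : Nop e%:P = 0.
Proof. by rewrite /Nop (linC hT) hT1 -!mul_polyC -!polyCM mulrCA mulVf // mulr1 subrr. Qed.

Lemma T_Nop r : T r = c *: (r - Nop r).
Proof. by rewrite /Nop opprB addrC subrK scalerA divff // scale1r. Qed.

Lemma size_Nop r : (size (Nop r) <= (size r).-1)%N.
Proof.
case E: (size r) => [|m].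
  by move/eqP: E; rewrite size_poly_eq0 => /eqP ->; rewrite /Nop (lin0 hT) scaler0 subr0 size_poly0.
apply: (iterD_eq0_size hpsi); rewrite /= -(iter_commD m commD_Nop).
have Dc : D (iter m D r) = 0 by rewrite -[D _]/(iter m.+1 D r) iterD_size // E.
by rewrite (D_eq0 hpsi Dc) Nop_const.
Qed.

Lemma iterN_size k r : (size r <= k)%N -> iter k Nop r = 0.
Proof.
elim: k r => [|k IH] r h.
  by move: h; rewrite leqn0 size_poly_eq0 => /eqP ->.
rewrite iterSr IH // (leq_trans (size_Nop r)) //.
by case: (size r) h.
Qed.

Definition Tinv (r : {poly F}) := c^-1 *: \sum_(k < size r) iter k Nop r.

Lemma Tinv_big M r : (size r <= M)%N -> Tinv r = c^-1 *: \sum_(k < M) iter k Nop r.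
Proof.
move=> h; rewrite /Tinv (big_ord_widen M (fun k => iter k Nop r) h) big_mkcond.
congr (_ *: _); apply: eq_bigr => i _; case: ifP => // /negbT.
by rewrite -leqNgt => hi; rewrite iterN_size.
Qed.

Lemma T_Tinv r : T (Tinv r) = r.
Proof.
rewrite /Tinv (linZ hT) (lin_sum hT).
have -> : \sum_(k < size r) T (iter k Nop r) = c *: \sum_(k < size r) (iter k Nop r - iter k.+1 Nop r).
  rewrite scaler_sumr; apply: eq_bigr => k _; by rewrite T_Nop.
by rewrite (@tele F _ (fun k => iter k Nop r)) /= iterN_size // subr0 scalerA mulVf // scale1r.
Qed.

Lemma Tinv_T r : Tinv (T r) = r.
Proof.
set M := maxn (size r) (size (T r)).
rewrite (Tinv_big (leq_maxr (size r) (size (T r)))).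
have -> : \sum_(k < M) iter k Nop (T r) = c *: \sum_(k < M) (iter k Nop r - iter k.+1 Nop r).
  rewrite scaler_sumr; apply: eq_bigr => k _.
  by rewrite T_Nop (linZ (lin_iter k lin_Nop)) (linB (lin_iter k lin_Nop)) -iterSr.
by rewrite (@tele F _ (fun k => iter k Nop r)) /= iterN_size ?leq_maxl // subr0 scalerA mulVf // scale1r.
Qed.

Lemma lin_Tinv : lin Tinv.
Proof.
move=> a p q; set M := maxn (size (a *: p + q)) (maxn (size p) (size q)).
rewrite (@Tinv_big M (a *: p + q)) ?leq_maxl //.
rewrite (@Tinv_big M p) ?(leq_trans (leq_maxl _ (size q)) (leq_maxr _ _)) //.
rewrite (@Tinv_big M q) ?(leq_trans (leq_maxr (size p) _) (leq_maxr _ _)) //.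
rewrite scalerA mulrC -scalerA -scalerDr; congr (_ *: _).
rewrite scaler_sumr -big_split /=; apply: eq_bigr => k _; exact: (lin_iter k lin_Nop).
Qed.

Lemma commD_Tinv : commD psi Tinv.
Proof.
move=> r; rewrite (@Tinv_big (size r) (D r)) ?size_D //.
rewrite /Tinv (linZ (@lin_dpsi _ psi)) (lin_sum (@lin_dpsi _ psi)); congr (_ *: _).
by apply: eq_bigr => k _; rewrite (commD_iter k commD_Nop).
Qed.
End Inv.

Section Main.
Variable (F : fieldType) (psi : nat -> F).
Hypothesis hc : [pchar F] =i pred0.
Hypothesis hpsi0 : psi 0%N = 1.
Hypothesis hpsi : forall n, psi n != 0.
Local Notation D := (dpsi psi).
Local Notation X := (xhat psi).
Local Notation pin := (pincherle psi).
Implicit Types (r p q : {poly F}).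

Lemma pin_commD T : lin T -> commD psi T -> commD psi (pin T).
Proof.
move=> hT hD r; rewrite /pincherle (linB (@lin_dpsi _ psi)) -(hD (X r)).
rewrite (commDX hpsi r) (commDX hpsi (T r)) (linD hT) (hD r); ring.
Qed.

Lemma pin_comp T U r : lin T ->
  pin (fun p => T (U p)) r = pin T (U r) + T (pin U r).
Proof. by move=> hT; rewrite /pincherle (linB hT); ring. Qed.

Lemma D_Xn n : D 'X^n = npsi psi n *: 'X^(n.-1).
Proof.
apply/polyP => i; rewrite coef_dpsi coefZ !coefXn.
case: n => [|n]; first by rewrite /= !mul0r.
by rewrite eqSS; case: eqP => [->|]; [rewrite mul1r mulr1 | rewrite mul0r mulr0].
Qed.

Lemma X_Xn n : X 'X^n = (n.+1%:R / npsi psi n.+1) *: 'X^(n.+1).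
Proof.
apply/polyP => i; rewrite coef_xhat coefZ !coefXn.
case: i => [|i]; first by rewrite /= mulr0.
rewrite eqSS coefXn; case: (eqVneq i n) => [->|ne]; first by rewrite mul1r mulr1.
by rewrite !mul0r mulr0.
Qed.

Section Op.
Variable (S V Q : {poly F} -> {poly F}) (p : nat -> {poly F}).
Hypothesis hS : in_Sigma psi S.
Hypothesis hV : in_Sigma psi V.
Hypothesis SV : forall q, S (V q) = q.
Hypothesis VS : forall q, V (S q) = q.
Hypothesis hQ : forall q, Q q = D (S q).
Hypothesis hp : basic_seq psi Q p.

Let lS : lin S := hS.1.
Let lV : lin V := hV.1.
Let SD : commD psi S := Sigma_commD hpsi hc hS.
Let VD : commD psi V := Sigma_commD hpsi hc hV.
Let lD : lin D := @lin_dpsi _ psi.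
Let lQ : lin Q.
Proof. by move=> a r s; rewrite !hQ lS lD. Qed.
Let QD : commD psi Q.
Proof. by move=> r; rewrite !hQ SD. Qed.
Let lW n : lin (iter n V) := lin_iter n lV.
Let WD n : commD psi (iter n V) := commD_iter n VD.
Let lS' : lin (pin S) := pin_lin psi lS.
Let S'D : commD psi (pin S) := pin_commD lS SD.
Let lQ' : lin (pin Q) := pin_lin psi lQ.
Let Q'D : commD psi (pin Q) := pin_commD lQ QD.

Lemma VScomm r : V (pin S r) = pin S (V r).
Proof. exact: (Sigma_comm hpsi hpsi0 lV VD lS' S'D). Qed.

Lemma pin_V r : pin V r = - V (pin S (V r)).
Proof.
have h : pin (fun q => S (V q)) r = 0.
  by rewrite /pincherle !SV subrr.
rewrite pin_comp // in h.
have := congr1 V h; rewrite (linD lV) VS (lin0 lV) => /eqP.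
by rewrite addrC addr_eq0 => /eqP.
Qed.

Lemma pin_W n r : pin (iter n V) r = - (n%:R) *: pin S (iter n.+1 V r).
Proof.
elim: n r => [|n IH] r.
  by rewrite /pincherle /= subrr oppr0 scale0r.
rewrite -[iter n.+1 V]/(fun q => V (iter n V q)) pin_comp // pin_V IH.
rewrite (linZ lV) !VScomm -[V (V (iter n V r))]/(iter n.+2 V r).
by rewrite -scaleN1r -scalerDl mulrS opprD.
Qed.

Lemma natn0 n : (0 < n)%N -> (n%:R : F) != 0.
Proof. by move=> h; have /pcharf0P -> := hc; rewrite -lt0n. Qed.

Lemma Qprime r : pin Q r = S r + D (pin S r).
Proof.
rewrite /pincherle !hQ (linB lD) (commDX hpsi (S r)); ring.
Qed.

Definition qq n := pin Q (iter n.+1 V 'X^n).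

Lemma qq0 : qq 0 = 1.
Proof.
rewrite /qq Qprime /= SV -S'D -VD.
have -> : D 1 = 0 by have := D_Xn 0; rewrite expr0 scale0r.
by rewrite (lin0 lV) (lin0 lS') addr0.
Qed.

Lemma qA n : (0 < n)%N -> qq n = iter n V 'X^n
   - (npsi psi n / n%:R) *: pin (iter n V) 'X^(n.-1).
Proof.
move=> n0; rewrite /qq Qprime -[iter n.+1 V _]/(V (iter n V 'X^n)) SV.
rewrite -S'D -VD -WD D_Xn (linZ (lW n)) (linZ lV) (linZ lS') pin_W.
rewrite -[V (iter n V _)]/(iter n.+1 V 'X^(n.-1)).
congr (_ + _); rewrite scalerA -scaleNr; congr (_ *: _); rewrite mulrN opprK divfK ?natn0 //.
Qed.

Lemma qB n : (0 < n)%N -> qq n = (npsi psi n / n%:R) *: X (iter n V 'X^(n.-1)).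
Proof.
case: n => // m _; rewrite qA // -[m.+1.-1]/m /pincherle X_Xn (linZ (lW m.+1)).
have ck : (npsi psi m.+1 / m.+1%:R) * (m.+1%:R / npsi psi m.+1) = 1.
  have h1 := npsiS_neq0 hpsi m; have h2 := @natn0 m.+1 isT; field.
  by rewrite h1 addrC natr1 h2.
by rewrite scalerBr scalerA ck scale1r opprB addrC subrK.
Qed.

Lemma Q_X r : Q (X r) = X (Q r) + pin Q r.
Proof. by rewrite /pincherle addrC subrK. Qed.

Lemma qQ n : (0 < n)%N -> Q (qq n) = npsi psi n *: qq n.-1.
Proof.
case: n => // m _; rewrite qB // (linZ lQ) Q_X -[m.+1.-1]/m.
change (pin Q (iter m.+1 V 'X^m)) with (qq m).
rewrite -[iter m.+1 V _]/(V (iter m V 'X^m)) hQ SV -WD D_Xn (linZ (lW m)).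
rewrite (linZ (@lin_xhat _ psi)).
have -> : npsi psi m *: X (iter m V 'X^(m.-1)) = m%:R *: qq m.
  case: m => [|k]; first by rewrite [npsi _ 0]/= !scale0r.
  by rewrite qB // scalerA mulrC divfK ?natn0.
by rewrite -{2}[qq m]scale1r -scalerDl natr1 scalerA divfK ?natn0.
Qed.

Lemma qq_at0 n : (0 < n)%N -> (qq n)`_0 = 0.
Proof. by move=> n0; rewrite qB // coefZ coef_xhat mulr0. Qed.

Lemma p_qq n : p n = qq n.
Proof.
case: hp => _ [p0 [pat0 pQ]].
elim: n => [|n IH]; first by rewrite p0 qq0.
set d := p n.+1 - qq n.+1.
have Qd : Q d = 0 by rewrite /d (linB lQ) pQ qQ //= IH subrr.
have Dd : D d = 0 by rewrite -[d]VS -VD -hQ Qd (lin0 lV).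
have d0 : d`_0 = 0 by rewrite /d coefB qq_at0 // -horner_coef0 pat0 // subrr.
by apply/eqP; rewrite -subr_eq0 -/d (D_eq0 hpsi Dd) d0.
Qed.

Lemma Q'1 : pin Q 1 = ((S 1)`_0)%:P.
Proof.
have D1 : D 1 = 0 by have := D_Xn 0; rewrite expr0 scale0r.
rewrite Qprime -S'D D1 (lin0 lS') addr0.
by apply: (D_eq0 hpsi); rewrite -SD D1 (lin0 lS).
Qed.

Lemma S1_neq0 : (S 1)`_0 != 0.
Proof.
apply/negP => /eqP h.
have : S 1 = 0.
  by rewrite (D_eq0 hpsi (r := S 1)) ?h // -SD (@D_Xn 0) scale0r (lin0 lS).
move/(congr1 V); rewrite VS (lin0 lV) => /eqP; by rewrite oner_eq0.
Qed.


Lemma main_op :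
  (forall n : nat, (0 < n)%N ->
     [/\ p n = pincherle psi Q (iter n.+1 V ('X^n)),
         p n = iter n V ('X^n)
               - (npsi psi n / n%:R) *: pincherle psi (iter n V) ('X^(n.-1))
       & p n = (npsi psi n / n%:R) *: xhat psi (iter n V ('X^(n.-1)))])
  /\
  (exists Qpinv : {poly F} -> {poly F},
     [/\ in_Sigma psi Qpinv,
         (forall q, pincherle psi Q (Qpinv q) = q),
         (forall q, Qpinv (pincherle psi Q q) = q)
       & forall n : nat, (0 < n)%N ->
           p n = (npsi psi n / n%:R) *: xhat psi (Qpinv (p n.-1))]).
Proof.
split.
  by move=> n n0; rewrite p_qq; split => //; [exact: qA | exact: qB].
have hc0 := S1_neq0.
exists (Tinv (pin Q) ((S 1)`_0)); split.
- apply: commD_Sigma => //.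
    exact: (lin_Tinv hpsi lQ' Q'D Q'1 hc0).
  exact: (commD_Tinv hpsi lQ' Q'D Q'1 hc0).
- by move=> q; apply: (T_Tinv hpsi lQ' Q'D Q'1 hc0).
- by move=> q; apply: (Tinv_T hpsi lQ' Q'D Q'1 hc0).
- case=> // m _; rewrite -[m.+1.-1]/m (p_qq m.+1) (p_qq m).
  change (qq m) with (pin Q (iter m.+1 V 'X^m)).
  by rewrite (Tinv_T hpsi lQ' Q'D Q'1 hc0) qB.
Qed.

End Op.
End Main.

Theorem mainTheorem11 (F : fieldType) (psi : nat -> F)
  (hchar : [pchar F] =i pred0)
  (hpsi0 : psi 0%N = 1) (hpsi : forall n, psi n != 0)
  (S Sinv Q : {poly F} -> {poly F}) (p : nat -> {poly F}) :
  in_Sigma psi S -> in_Sigma psi Sinv ->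
  (forall q, S (Sinv q) = q) -> (forall q, Sinv (S q) = q) ->
  (forall q, Q q = dpsi psi (S q)) ->
  is_delta psi Q -> basic_seq psi Q p ->
  (forall n : nat, (0 < n)%N ->
     [/\ p n = pincherle psi Q (iter n.+1 Sinv ('X^n)),
         p n = iter n Sinv ('X^n)
               - (npsi psi n / n%:R) *: pincherle psi (iter n Sinv) ('X^(n.-1))
       & p n = (npsi psi n / n%:R) *: xhat psi (iter n Sinv ('X^(n.-1)))])
  /\
  (exists Qpinv : {poly F} -> {poly F},
     [/\ in_Sigma psi Qpinv,
         (forall q, pincherle psi Q (Qpinv q) = q),
         (forall q, Qpinv (pincherle psi Q q) = q)
       & forall n : nat, (0 < n)%N ->
           p n = (npsi psi n / n%:R) *: xhat psi (Qpinv (p n.-1))]).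
Proof.
move=> hS hV SV VS hQ _ hp.
exact: (main_op hchar hpsi0 hpsi hS hV SV VS hQ hp).
Qed.
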